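(* Every weakly mixing dynamical system $(X,T)$ is transitively sensitive.
   Context: A dynamical system $(X,T)$: $X$ is a compact metric space (metric $d$) with more than one point and without isolated points, $T:X\to X$ a continuous surjection. ''Opene'' means open and nonempty. $(X,T)$ is transitive if $N_T(U,V)=\{n\in\mathbb{Z}_+:U\cap T^{-n}V\neq\varnothing\}\neq\varnothing$ for all opene $U,V$; weakly mixing if $(X\times X,T\times T)$ is transitive. With $S_T(U,\delta)=\{n\in\mathbb{Z}_+:\exists x_1,x_2\in U,\ d(T^nx_1,T^nx_2)>\delta\}$, $(X,T)$ is transitively sensitive if there is $\delta>0$ with $S_T(W,\delta)\cap N_T(U,V)\neq\varnothing$ for all opene $U,V,W\subset X$. *)

(* Defs.v *)
From HB Require Import structures.
From mathcomp Require Import all_boot all_order all_algebra.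
From mathcomp Require Import all_classical all_reals all_analysis.
Set Implicit Arguments. Unset Strict Implicit. Unset Printing Implicit Defensive.
Import Order.TTheory GRing.Theory Num.Theory.
Local Open Scope classical_set_scope.
Local Open Scope ring_scope.

Definition opene {Y : topologicalType} (U : set Y) : Prop := open U /\ U !=set0.

Definition N_T {Y : topologicalType} (f : Y -> Y) (U V : set Y) : set nat :=
  [set n | U `&` (iter n f @^-1` V) !=set0].

Definition transitive {Y : topologicalType} (f : Y -> Y) : Prop :=
  forall U V : set Y, opene U -> opene V -> N_T f U V !=set0.

Definition prod_map {Y : Type} (f : Y -> Y) : Y * Y -> Y * Y :=
  fun p => (f p.1, f p.2).

Definition weakly_mixing {Y : topologicalType} (f : Y -> Y) : Prop :=
  transitive (prod_map f).

Definition S_T {R : realType} {X : metricType R} (f : X -> X) (U : set X)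
  (delta : R) : set nat :=
  [set n | exists x1 x2, U x1 /\ U x2 /\ delta < mdist (iter n f x1) (iter n f x2)].

Definition transitively_sensitive {R : realType} {X : metricType R}
  (f : X -> X) : Prop :=
  exists2 delta : R, 0 < delta &
    forall U V W : set X, opene U -> opene V -> opene W ->
      S_T f W delta `&` N_T f U V !=set0.

Definition dynamical_system {R : realType} {X : metricType R} (f : X -> X) : Prop :=
  [/\ compact [set: X],
      (exists x y : X, x <> y),
      (forall x : X, ~ open [set x]),
      continuous f &
      (forall y : X, exists x, f x = y)].

(* Main.v *)
Require Import Defs.
From HB Require Import structures.
From mathcomp Require Import all_boot all_order all_algebra.
From mathcomp Require Import all_classical all_reals all_analysis.
From mathcomp Require Import ring lra.
Import Order.TTheory GRing.Theory Num.Theory.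
Local Open Scope classical_set_scope.
Local Open Scope ring_scope.

Lemma openX' (Y : topologicalType) (A B : set Y) : open A -> open B -> open (A `*` B).
Proof.
move=> oA oB; rewrite openE => -[a b] [/= Aa Bb].
rewrite /interior /=.
exists (A, B) => //=; split; [exact: open_nbhs_nbhs | exact: open_nbhs_nbhs].
Qed.

Lemma iter_cont (Y : topologicalType) (f : Y -> Y) k : continuous f -> continuous (iter k f).
Proof.
move=> cf; elim: k => [|k IH] x /=; first exact: cvg_id.
exact: (continuous_comp (IH x) (cf _)).
Qed.

Lemma iter_prod (Y : Type) (f : Y -> Y) k (p : Y * Y) :
  iter k (prod_map f) p = (iter k f p.1, iter k f p.2).
Proof. by elim: k => [|k IH] /=; [case: p | rewrite IH]. Qed.

Lemma far_apart (R : realType) (X : metricType R) (x y p q : X) (d : R) :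
  mdist x y = 4 * d -> ball x d p -> ball y d q -> d < mdist p q.
Proof.
move=> hd bp bq; rewrite ltNge; apply/negP => le.
have d0 : 0 < d.
  have := @mdist_ge0 R X x p; have := bp; rewrite ballEmdist /= => ?; lra.
have bpq : ball p (2 * d) q by rewrite ballEmdist /=; lra.
have := ball_triangle (ball_triangle bp bpq) (ball_sym bq).
rewrite ballEmdist /= hd; lra.
Qed.

Theorem proposition4p5 (R : realType) (X : metricType R) (T : X -> X) :
  dynamical_system T -> weakly_mixing T -> transitively_sensitive T.
Proof.
move=> [_ [x [y xy]] _ cT _] wm.
have dpos : 0 < mdist x y by rewrite mdist_gt0; apply/eqP.
set d := mdist x y / 4.
have hd : mdist x y = 4 * d by rewrite /d; field.
have d0 : 0 < d by rewrite /d; lra.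
exists d => // U V W [oU [u0 Uu0]] [oV [v0 Vv0]] [oW [w0 Ww0]].
set B1 := (ball x d)°; set B2 := (ball y d)°.
have oB1 : open B1 by exact: open_interior.
have oB2 : open B2 by exact: open_interior.
have B1x : B1 x by apply: nbhs_singleton; apply: nbhs_interior; exact: nbhsx_ballx.
have B2y : B2 y by apply: nbhs_singleton; apply: nbhs_interior; exact: nbhsx_ballx.
have cI k : continuous (iter k T) by exact: iter_cont.
have [k [[a b] [[Wa B1b] /=]]] : N_T (prod_map T) (W `*` B1) (W `*` B2) !=set0.
  apply: wm; split; try exact: openX'.
  - by exists (w0, x).
  - by exists (w0, y).
rewrite iter_prod /= => -[Wka B2kb].
set W' := W `&` iter k T @^-1` W; set B' := B1 `&` iter k T @^-1` B2.
have oW' : open W' by apply: openI => //; exact: (proj1 (continuousP _) (cI k)).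
have oB' : open B' by apply: openI => //; exact: (proj1 (continuousP _) (cI k)).
have [n [[w u] [[[Ww Wkw] Uu] /=]]] : N_T (prod_map T) (W' `*` U) (B' `*` V) !=set0.
  apply: wm; split; try exact: openX'.
  - by exists (a, u0).
  - by exists (b, v0).
rewrite iter_prod /= => -[[B1nw B2knw] Vnu].
exists n; split; last by exists u.
exists w, (iter k T w); split => //; split => //.
have h1 : ball x d (iter n T w) by exact: interior_subset B1nw.
have h2 : ball y d (iter n T (iter k T w)).
  have -> : iter n T (iter k T w) = iter k T (iter n T w).
    by rewrite -!iterD addnC.
  exact: interior_subset B2knw.
have F := @far_apart R X x y _ _ d hd. exact: (F _ _ h1 h2).
Qed.
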